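(* Let $\mathcal{R}$ be a TRS and $\ell \to r$ a left-linear rewrite rule. Consider a local peak $\Gamma$ of the form $t \;{}_{\mathcal{R}}\!\overset{P}{\Leftarrow}\; s \xrightarrow{\epsilon}_{\{\ell \to r\}} u$, together with a fixed choice of the rules $\ell_p \to r_p \in \mathcal{R}$ used at the positions $p \in P$ in the parallel step $s \overset{P}{\Rightarrow}_\mathcal{R} t$. (a) If $\Gamma$ is orthogonal, then there exist a term $v$ and a set $P'$ of pairwise parallel positions such that $t = v$ or $t \xrightarrow{\epsilon}_{\{\ell\to r\}} v$, and $u \overset{P'}{\Rightarrow}_\mathcal{R} v$, and $\mathcal{V}ar(v,P') \subseteq \mathcal{V}ar(s,P)$. (b) If $\Gamma$ is not orthogonal, then there exist a parallel critical peak $t_0 \;{}_{\mathcal{R}}\!\overset{P_0}{\Leftarrow}\; s_0 \xrightarrow{\epsilon}_{\{\ell \to r\}} u_0$ between $\mathcal{R}$ and $\{\ell \to r\}$ and substitutions $\sigma$, $\tau$ such that $s = s_0\sigma$, $t = t_0\tau$, $u = u_0\sigma$, $\sigma \Rightarrow_\mathcal{R} \tau$, $t_0\sigma \overset{P\setminus P_0}{\Rightarrow}_\mathcal{R} t_0\tau$, and $P_0 \subseteq P$.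
   Context: Terms are built from a signature $\mathcal{F}$ and variables $\mathcal{V}$. A rule $\ell\to r$ requires $\ell\notin\mathcal{V}$ and $\mathcal{V}ar(r)\subseteq\mathcal{V}ar(\ell)$; a TRS is a set of rules, $\to_\mathcal{R}$ its rewrite relation, and $s \xrightarrow{p}_\mathcal{R} t$ denotes a step at position $p$ ($\epsilon$ is the root position). A rule is left-linear if no variable occurs twice in $\ell$. Positions $p,q$ are parallel if neither is a prefix of the other. $\mathcal{P}os_\mathcal{F}(t)$ is the set of positions of function symbols in $t$. Parallel step: for a set $P$ of pairwise parallel positions of $s$, $s \overset{P}{\Rightarrow}_\mathcal{R} t$ holds iff for every $p\in P$ there are a rule $\ell'\to r'\in\mathcal{R}$ and a substitution $\mu$ with $s|_p=\ell'\mu$ and $t|_p=r'\mu$, and $t$ coincides with $s$ outside the positions in $P$ (i.e. $t = s[t|_p]_{p\in P}$); $P=\varnothing$ gives $s=t$. $s\Rightarrow_\mathcal{R} t$ means $s \overset{P}{\Rightarrow}_\mathcal{R} t$ for some $P$, and $t \;{}_{\mathcal{R}}\!\overset{P}{\Leftarrow}\; s$ means $s \overset{P}{\Rightarrow}_\mathcal{R} t$. For substitutions, $\sigma\Rightarrow_\mathcal{R}\tau$ means $x\sigma\Rightarrow_\mathcal{R}x\tau$ for all variables $x$. $\mathcal{V}ar(t,P)=\bigcup_{p\in P}\mathcal{V}ar(t|_p)$. A local peak $t \;{}_{\mathcal{R}}\!\overset{P}{\Leftarrow}\; s \xrightarrow{\epsilon}_{\{\ell\to r\}} u$ using rule $\ell_p\to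 r_p$ at each $p\in P$ is orthogonal if either $P\cap\mathcal{P}os_\mathcal{F}(\ell)=\varnothing$, or $P=\{\epsilon\}$ and $\ell_\epsilon\to r_\epsilon$ is a variant of $\ell\to r$ (a variant is a rule obtained by a variable renaming). Parallel critical peak between TRSs $\mathcal{R}$ and $\mathcal{S}$: let $\ell\to r$ be a variant of an $\mathcal{S}$-rule, $P\subseteq\mathcal{P}os_\mathcal{F}(\ell)$ a non-empty set of pairwise parallel positions, and for each $p\in P$ let $\ell_p\to r_p$ be a variant of an $\mathcal{R}$-rule, such that none of the rules $\ell\to r$, $\ell_p\to r_p$ ($p\in P$) shares a variable with another, $\sigma$ is a most general unifier of $\{\ell_p\approx\ell|_p\}_{p\in P}$, and if $P=\{\epsilon\}$ then $\ell_\epsilon\to r_\epsilon$ is not a variant of $\ell\to r$. Then the peak $(\ell\sigma)[r_p\sigma]_{p\in P} \;{}_{\mathcal{R}}\!\overset{P}{\Leftarrow}\; \ell\sigma \xrightarrow{\epsilon}_\mathcal{S} r\sigma$ is a parallel critical peak between $\mathcal{R}$ and $\mathcal{S}$. *)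

(* Defs.v *)
From Stdlib Require Import List.
Import ListNotations.
Set Implicit Arguments.

Section TRS.
Context {F V : Type}.

(* Terms over function symbols F and variables V (function symbols are
   applied to lists of arguments; arities are not enforced). *)
Inductive term : Type :=
| Var : V -> term
| Fun : F -> list term -> term.

(* Positions: sequences of argument indices (0-based); [] is the root ε. *)
Definition pos := list nat.

Definition prefix (p q : pos) : Prop := exists r, q = p ++ r.
Definition parallel (p q : pos) : Prop := ~ prefix p q /\ ~ prefix q p.
Definition pairwise_parallel (P : pos -> Prop) : Prop :=
  forall p q, P p -> P q -> p <> q -> parallel p q.

Fixpoint subterm (t : term) (p : pos) : option term :=
  match p with
  | [] => Some t
  | i :: p' =>
      match t with
      | Var _ => None
      | Fun _ ts =>
          match nth_error ts i with
          | Some ti => subterm ti p'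
          | None => None
          end
      end
  end.

Definition posF (t : term) (p : pos) : Prop :=
  exists f ts, subterm t p = Some (Fun f ts).

Definition label (t : term) (p : pos) : option (V + (F * nat)) :=
  match subterm t p with
  | Some (Var x) => Some (inl x)
  | Some (Fun f ts) => Some (inr (f, length ts))
  | None => None
  end.

Fixpoint vars (t : term) : list V :=
  match t with
  | Var x => [x]
  | Fun _ ts => flat_map vars ts
  end.

Definition subst := V -> term.

Fixpoint app_subst (s : subst) (t : term) : term :=
  match t with
  | Var x => s x
  | Fun f ts => Fun f (map (app_subst s) ts)
  end.

Record rule : Type := mkRule { lhs : term; rhs : term }.

Definition wf_rule (rl : rule) : Prop :=
  (forall x, lhs rl <> Var x) /\
  (forall x, In x (vars (rhs rl)) -> In x (vars (lhs rl))).

Definition TRS (R : rule -> Prop) : Prop := forall rl, R rl -> wf_rule rl.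

Definition left_linear (rl : rule) : Prop := NoDup (vars (lhs rl)).

Definition variant (rl' rl : rule) : Prop :=
  exists (pi pi' : V -> V),
    (forall x, pi' (pi x) = x) /\ (forall x, pi (pi' x) = x) /\
    lhs rl' = app_subst (fun x => Var (pi x)) (lhs rl) /\
    rhs rl' = app_subst (fun x => Var (pi x)) (rhs rl).

Definition agree_outside (s t : term) (P : pos -> Prop) : Prop :=
  forall q, (forall p, P p -> ~ prefix p q) -> label s q = label t q.

Definition par_replace (s : term) (P : pos -> Prop) (f : pos -> term)
  (t : term) : Prop :=
  pairwise_parallel P /\
  (forall p, P p -> subterm s p <> None) /\
  (forall p, P p -> subterm t p = Some (f p)) /\
  agree_outside s t P.

Definition par_step_with (R : rule -> Prop) (P : pos -> Prop)
  (rho : pos -> rule) (s t : term) : Prop :=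
  pairwise_parallel P /\
  (forall p, P p -> R (rho p) /\
     exists mu, subterm s p = Some (app_subst mu (lhs (rho p))) /\
                subterm t p = Some (app_subst mu (rhs (rho p)))) /\
  agree_outside s t P.

Definition par_step (R : rule -> Prop) (P : pos -> Prop) (s t : term) : Prop :=
  exists rho, par_step_with R P rho s t.

Definition par_step_subst (R : rule -> Prop) (sg tau : subst) : Prop :=
  forall x, exists P, par_step R P (sg x) (tau x).

Definition root_step (rl : rule) (s u : term) : Prop :=
  exists mu, s = app_subst mu (lhs rl) /\ u = app_subst mu (rhs rl).

Definition vars_at (t : term) (P : pos -> Prop) (x : V) : Prop :=
  exists p t', P p /\ subterm t p = Some t' /\ In x (vars t').

Definition orthogonal_peak (rl : rule) (P : pos -> Prop) (rho : pos -> rule)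
  : Prop :=
  (forall p, P p -> ~ posF (lhs rl) p) \/
  ((forall p, P p <-> p = []) /\ variant (rho []) rl).

Definition rule_vars (rl : rule) (x : V) : Prop :=
  In x (vars (lhs rl)) \/ In x (vars (rhs rl)).

Definition unifies (P : pos -> Prop) (rho : pos -> rule) (l : term) (sg : subst)
  : Prop :=
  forall p, P p -> exists lp, subterm l p = Some lp /\
    app_subst sg (lhs (rho p)) = app_subst sg lp.

Definition is_mgu (P : pos -> Prop) (rho : pos -> rule) (l : term) (sg : subst)
  : Prop :=
  unifies P rho l sg /\
  forall th, unifies P rho l th ->
    exists de, forall x, th x = app_subst de (sg x).

Definition par_critical_peak (R S : rule -> Prop) (t0 : term) (P0 : pos -> Prop)
  (s0 u0 : term) : Prop :=
  exists (rl : rule) (rho : pos -> rule) (sg : subst),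
    (exists rl0, S rl0 /\ variant rl rl0) /\
    (exists p, P0 p) /\
    (forall p, P0 p -> posF (lhs rl) p) /\
    pairwise_parallel P0 /\
    (forall p, P0 p -> exists rl0, R rl0 /\ variant (rho p) rl0) /\
    (forall p x, P0 p -> rule_vars (rho p) x -> ~ rule_vars rl x) /\
    (forall p q x, P0 p -> P0 q -> p <> q ->
        rule_vars (rho p) x -> ~ rule_vars (rho q) x) /\
    is_mgu P0 rho (lhs rl) sg /\
    ((forall p, P0 p <-> p = []) -> ~ variant (rho []) rl) /\
    s0 = app_subst sg (lhs rl) /\
    par_replace s0 P0 (fun p => app_subst sg (rhs (rho p))) t0 /\
    u0 = app_subst sg (rhs rl).

End TRS.
Arguments term : clear implicits.

(* Main.v *)
Require Import Defs.
From Stdlib Require Import List Arith Lia.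
From Stdlib Require Import ClassicalEpsilon FunctionalExtensionality PropExtensionality Classical.
Import ListNotations.

Section S.
Context {F V : Type}.
Local Notation tm := (term F V).

Definition dec (P : Prop) : {P} + {~P} := excluded_middle_informative P.
Definition eqv (x y : V) : {x = y} + {x <> y} := dec (x = y).

Lemma term_ind' (Pr : tm -> Prop) :
  (forall x, Pr (Var x)) ->
  (forall f ts, (forall a, In a ts -> Pr a) -> Pr (Fun f ts)) ->
  forall t, Pr t.
Proof.
  intros HV HF. fix IH 1. intros [x|f ts].
  - apply HV.
  - apply HF. induction ts as [|a ts IHts]; intros b Hb.
    + destruct Hb.
    + destruct Hb as [<-|Hb]. apply IH. apply IHts, Hb.
Qed.

Lemma pred_ext (P1 P2 : pos -> Prop) : (forall p, P1 p <-> P2 p) -> P1 = P2.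
Proof. intros H. apply functional_extensionality. intros p. apply propositional_extensionality. apply H. Qed.

Lemma subterm_app (t : tm) p q :
  subterm t (p ++ q) = match subterm t p with Some a => subterm a q | None => None end.
Proof.
  revert t; induction p as [|i p IH]; intros t; simpl; auto.
  destruct t; auto. destruct (nth_error l i); auto.
Qed.

Lemma app_subst_comp (s1 s2 : subst) (t : tm) :
  app_subst s2 (app_subst s1 t) = app_subst (fun x => app_subst s2 (s1 x)) t.
Proof.
  induction t using term_ind'; simpl; auto.
  f_equal. rewrite map_map. apply map_ext_in. auto.
Qed.

Lemma app_subst_ext (s1 s2 : subst) (t : tm) :
  (forall x, In x (vars t) -> s1 x = s2 x) -> app_subst s1 t = app_subst s2 t.
Proof.
  induction t using term_ind'; simpl; intros Hx.
  - apply Hx; auto.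
  - f_equal. apply map_ext_in. intros a Ha. apply H; auto.
    intros x Hxa. apply Hx. apply in_flat_map. eauto.
Qed.

Lemma app_subst_id (t : tm) : app_subst (@Var F V) t = t.
Proof.
  induction t using term_ind'; simpl; auto. f_equal.
  rewrite <- (map_id ts) at 2. apply map_ext_in. auto.
Qed.

Lemma vars_subst (sg : subst) (t : tm) z :
  In z (vars (app_subst sg t)) <-> exists y, In y (vars t) /\ In z (vars (sg y)).
Proof.
  induction t using term_ind'; simpl.
  - split. intros; exists x; auto. intros [y [[<-|[]] H]]; auto.
  - rewrite flat_map_concat_map, map_map, <- flat_map_concat_map.
    split.
    + intros Hz. apply in_flat_map in Hz as [a [Ha Hz]]. apply H in Hz as [y [Hy Hz]]; auto.
      exists y. split; auto. apply in_flat_map. eauto.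
    + intros [y [Hy Hz]]. apply in_flat_map in Hy as [a [Ha Hy]]. apply in_flat_map.
      exists a. split; auto. apply H; eauto.
Qed.

Lemma subterm_subst (sg : subst) (t : tm) p a :
  subterm t p = Some a -> subterm (app_subst sg t) p = Some (app_subst sg a).
Proof.
  revert t; induction p as [|i p IH]; intros t H; simpl in *.
  - congruence.
  - destruct t as [x|f ts]; try discriminate. simpl.
    rewrite nth_error_map. destruct (nth_error ts i); simpl; try discriminate. auto.
Qed.

Lemma subterm_subst_var (sg : subst) (t : tm) q x r :
  subterm t q = Some (Var x) -> subterm (app_subst sg t) (q ++ r) = subterm (sg x) r.
Proof.
  intros H. rewrite subterm_app. erewrite subterm_subst; eauto. reflexivity.
Qed.

Lemma subterm_vars (t : tm) p a x : subterm t p = Some a -> In x (vars a) -> In x (vars t).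
Proof.
  revert t; induction p as [|i p IH]; intros t H Hx; simpl in *.
  - congruence.
  - destruct t as [y|f ts]; try discriminate.
    destruct (nth_error ts i) eqn:E; try discriminate. simpl. apply in_flat_map.
    exists t. split. eapply nth_error_In; eauto. eauto.
Qed.

Lemma var_pos (t : tm) x : In x (vars t) -> exists q, subterm t q = Some (Var x).
Proof.
  induction t using term_ind'; simpl; intros Hx.
  - destruct Hx as [<-|[]]. exists []. auto.
  - apply in_flat_map in Hx as [a [Ha Hx]]. destruct (H a Ha Hx) as [q Hq].
    apply In_nth_error in Ha as [i Hi]. exists (i :: q). simpl. rewrite Hi. auto.
Qed.

Lemma term_ext (s t : tm) : (forall q, label s q = label t q) -> s = t.
Proof.
  revert t. induction s as [x|f ts IH] using term_ind'; intros [y|g us] H.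
  - specialize (H []). unfold label in H. simpl in H. congruence.
  - specialize (H []). unfold label in H. simpl in H. congruence.
  - specialize (H []). unfold label in H. simpl in H. congruence.
  - pose proof (H []) as H0. unfold label in H0. simpl in H0. inversion H0; subst.
    f_equal. apply nth_error_ext. intros i.
    destruct (nth_error ts i) eqn:E1; destruct (nth_error us i) eqn:E2; auto.
    + f_equal. apply IH. eapply nth_error_In; eauto. intros q.
      specialize (H (i :: q)). unfold label in *. simpl in H. rewrite E1, E2 in H. auto.
    + apply nth_error_None in E2. assert (i < length ts) by (apply nth_error_Some; congruence). lia.
    + apply nth_error_None in E1. assert (i < length us) by (apply nth_error_Some; congruence). lia.
Qed.


Definition pr (P : pos -> Prop) (Q : pos -> tm -> tm -> Prop) (s t : tm) : Prop :=
  pairwise_parallel P /\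
  (forall p, P p -> exists a b, subterm s p = Some a /\ subterm t p = Some b /\ Q p a b) /\
  agree_outside s t P.

Lemma prefix_nil p : prefix [] p.
Proof. exists p. reflexivity. Qed.

Lemma prefix_cons i j p q : prefix (i :: p) (j :: q) <-> i = j /\ prefix p q.
Proof.
  split.
  - intros [r Hr]. inversion Hr; subst. split; auto. exists r; auto.
  - intros [<- [r Hr]]. exists r. simpl. congruence.
Qed.

Lemma prefix_to_nil p : prefix p [] -> p = [].
Proof. intros [r Hr]. destruct p; auto. discriminate. Qed.

Lemma pp_root (P : pos -> Prop) : pairwise_parallel P -> P [] -> forall p, P p -> p = [].
Proof.
  intros H H0 p Hp. destruct p as [|i p]; auto. exfalso.
  destruct (H [] (i :: p) H0 Hp ltac:(discriminate)) as [H1 _]. apply H1, prefix_nil.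
Qed.

Lemma pp_shift (P : pos -> Prop) i : pairwise_parallel P -> pairwise_parallel (fun q => P (i :: q)).
Proof.
  intros H p q Hp Hq Hne. destruct (H _ _ Hp Hq ltac:(congruence)) as [H1 H2].
  split; intros H3; [apply H1|apply H2]; apply prefix_cons; auto.
Qed.

Lemma pr_nil (P : pos -> Prop) Q (s t : tm) : (forall p, ~ P p) -> (pr P Q s t <-> s = t).
Proof.
  intros HP. split.
  - intros [_ [_ H]]. apply term_ext. intros q. apply H. intros p Hp. exfalso. eapply HP; eauto.
  - intros <-. split; [|split].
    + intros p q Hp. exfalso; eapply HP; eauto.
    + intros p Hp. exfalso; eapply HP; eauto.
    + intros q _. reflexivity.
Qed.

Lemma pr_root (P : pos -> Prop) Q (s t : tm) : P [] ->
  (pr P Q s t <-> (forall p, P p -> p = []) /\ Q [] s t).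
Proof.
  intros H0. split.
  - intros [Hpp [HQ _]]. split. apply pp_root; auto.
    destruct (HQ [] H0) as [a [b [Ha [Hb HQ']]]]. simpl in *. congruence.
  - intros [Hall HQ]. split; [|split].
    + intros p q Hp Hq Hne. exfalso. apply Hne. rewrite (Hall p), (Hall q); auto.
    + intros p Hp. rewrite (Hall p Hp). exists s, t. auto.
    + intros q Hq. exfalso. apply (Hq [] H0). apply prefix_nil.
Qed.

Lemma pr_var (P : pos -> Prop) Q x (t : tm) : ~ P [] ->
  (pr P Q (Var x) t <-> t = Var x /\ forall p, ~ P p).
Proof.
  intros H0. split.
  - intros Hpr. assert (HP : forall p, ~ P p).
    { intros [|i p] Hp. auto. destruct Hpr as [_ [HQ _]].
      destruct (HQ _ Hp) as [a [b [Ha _]]]. discriminate. }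
    split; auto. symmetry. apply (proj1 (pr_nil P Q (Var x) t HP)). auto.
  - intros [-> HP]. apply pr_nil; auto.
Qed.

Lemma pr_fun (P : pos -> Prop) Q f (ts : list tm) t : ~ P [] ->
  (pr P Q (Fun f ts) t <->
   exists ts', t = Fun f ts' /\ length ts' = length ts /\
     (forall i q, P (i :: q) -> i < length ts) /\
     (forall i a b, nth_error ts i = Some a -> nth_error ts' i = Some b ->
        pr (fun q => P (i :: q)) (fun q => Q (i :: q)) a b)).
Proof.
  intros H0. split.
  - intros [Hpp [HQ Hag]].
    assert (Hl := Hag [] ltac:(intros p Hp Hpre; apply prefix_to_nil in Hpre; subst; auto)).
    unfold label in Hl. simpl in Hl.
    destruct t as [y|g ts']; simpl in Hl; try discriminate. inversion Hl; subst.
    exists ts'. split; auto. split; auto. split.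
    + intros i q Hp. destruct (HQ _ Hp) as [a [b [Ha _]]]. simpl in Ha.
      destruct (nth_error ts i) eqn:E; try discriminate. apply nth_error_Some. congruence.
    + intros i a b Ha Hb. split; [|split].
      * apply pp_shift; auto.
      * intros p Hp. destruct (HQ _ Hp) as [a' [b' [Ha' [Hb' HQ']]]]. simpl in Ha', Hb'.
        rewrite Ha in Ha'. rewrite Hb in Hb'. eauto.
      * intros q Hq. specialize (Hag (i :: q)). unfold label in *. simpl in Hag.
        rewrite Ha, Hb in Hag. apply Hag. intros [|j p] Hp Hpre; auto.
        apply prefix_cons in Hpre as [<- Hpre]. eapply Hq; eauto.
  - intros [ts' [-> [Hlen [Hrange Hsub]]]].
    assert (Hnth : forall i, i < length ts -> exists a b, nth_error ts i = Some a /\ nth_error ts' i = Some b).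
    { intros i Hi. destruct (nth_error ts i) eqn:E1; [|apply nth_error_None in E1; lia].
      destruct (nth_error ts' i) eqn:E2; [|apply nth_error_None in E2; lia]. eauto. }
    split; [|split].
    + intros [|i p] [|j q] Hp Hq Hne; try contradiction.
      destruct (Nat.eq_dec i j) as [<-|Hij].
      * destruct (Hnth i (Hrange _ _ Hp)) as [a [b [Ha Hb]]].
        destruct (Hsub _ _ _ Ha Hb) as [Hpp _].
        destruct (Hpp p q Hp Hq ltac:(congruence)) as [H1 H2].
        split; intros H3; apply prefix_cons in H3 as [_ H3]; auto.
      * split; intros H3; apply prefix_cons in H3 as [H3 _]; auto.
    + intros [|i p] Hp; try contradiction.
      destruct (Hnth i (Hrange _ _ Hp)) as [a [b [Ha Hb]]].
      destruct (Hsub _ _ _ Ha Hb) as [_ [HQ _]]. simpl. rewrite Ha, Hb. auto.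
    + intros [|i q] Hq.
      * unfold label. simpl. rewrite Hlen. auto.
      * unfold label. simpl.
        destruct (nth_error ts i) eqn:E1.
        -- destruct (nth_error ts' i) eqn:E2; [|apply nth_error_None in E2; assert (i < length ts) by (apply nth_error_Some; congruence); lia].
           destruct (Hsub _ _ _ E1 E2) as [_ [_ Hag]]. apply Hag.
           intros p Hp Hpre. apply (Hq (i :: p) Hp). apply prefix_cons; auto.
        -- destruct (nth_error ts' i) eqn:E2; auto.
           apply nth_error_None in E1. assert (i < length ts') by (apply nth_error_Some; congruence). lia.
Qed.

Lemma pr_mono (P : pos -> Prop) (Q1 Q2 : pos -> tm -> tm -> Prop) s t :
  (forall p a b, P p -> Q1 p a b -> Q2 p a b) -> pr P Q1 s t -> pr P Q2 s t.
Proof.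
  intros H [H1 [H2 H3]]. split; [|split]; auto.
  intros p Hp. destruct (H2 p Hp) as [a [b [Ha [Hb HQ]]]]. eauto 6.
Qed.


Lemma pr_ext (P1 P2 : pos -> Prop) Q (s t : tm) :
  (forall p, P1 p <-> P2 p) -> pr P1 Q s t -> pr P2 Q s t.
Proof. intros H. rewrite (pred_ext P1 P2 H). auto. Qed.

Lemma pr_compose (Q : tm -> tm -> Prop) (Px : V -> pos -> Prop) (th th' : subst) (r : tm) :
  (forall x, In x (vars r) -> pr (Px x) (fun _ => Q) (th x) (th' x)) ->
  pr (fun p => exists q x r', p = q ++ r' /\ subterm r q = Some (Var x) /\ Px x r')
     (fun _ => Q) (app_subst th r) (app_subst th' r).
Proof.
  induction r as [x|f ts IH] using term_ind'; intros H.
  - replace (fun p => exists q y r', p = q ++ r' /\ subterm (Var x) q = Some (Var y) /\ Px y r') with (Px x).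
    + simpl. apply H. simpl; auto.
    + apply pred_ext. intros p. split.
      * intros Hp. exists [], x, p. auto.
      * intros [q [y [r' [-> [Hq Hr]]]]]. destruct q; simpl in Hq; try discriminate.
        inversion Hq; subst. auto.
  - simpl. apply pr_fun.
    { intros [q [y [r' [Hq [Hs _]]]]]. destruct q; simpl in *; discriminate. }
    exists (map (app_subst th') ts). split; auto. split. now rewrite !length_map. split.
    + intros i q [q0 [y [r' [Hq [Hs _]]]]]. rewrite length_map. destruct q0 as [|j q0]; simpl in Hs; try discriminate.
      simpl in Hq; injection Hq as Hij Hq'; subst j. destruct (nth_error ts i) eqn:E; try discriminate. apply nth_error_Some. congruence.
    + intros i a b Ha Hb. rewrite nth_error_map in Ha, Hb.
      destruct (nth_error ts i) as [c|] eqn:E; simpl in Ha, Hb; try discriminate.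
      inversion Ha; inversion Hb; subst.
      eapply pr_ext; [|apply (IH c)].
      * intros p. split.
        -- intros [q [y [r' [-> [Hs Hp]]]]]. exists (i :: q), y, r'. simpl. rewrite E. auto.
        -- intros [q [y [r' [Hq [Hs Hp]]]]]. destruct q as [|j q]; simpl in Hs; try discriminate.
           simpl in Hq; injection Hq as Hij Hq'; subst j. rewrite E in Hs. exists q, y, r'. auto.
      * eapply nth_error_In; eauto.
      * intros x Hx. apply H. simpl. apply in_flat_map.
        exists c. split; auto. eapply nth_error_In; eauto.
Qed.

Fixpoint mapi_aux {A B : Type} (f : nat -> A -> B) (k : nat) (l : list A) : list B :=
  match l with [] => [] | a :: l' => f k a :: mapi_aux f (S k) l' end.

Lemma nth_error_mapi {A B : Type} (f : nat -> A -> B) k l i :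
  nth_error (mapi_aux f k l) i = option_map (f (k + i)) (nth_error l i).
Proof.
  revert k i; induction l as [|a l IH]; intros k [|i]; simpl; auto.
  - rewrite Nat.add_0_r. auto.
  - rewrite IH. f_equal. f_equal. lia.
Qed.

Lemma length_mapi {A B : Type} (f : nat -> A -> B) k l : length (mapi_aux f k l) = length l.
Proof. revert k; induction l; simpl; auto. Qed.

Fixpoint repl (P : pos -> Prop) (g : pos -> tm) (t : tm) : tm :=
  if dec (P []) then g [] else
  match t with
  | Var x => Var x
  | Fun f ts => Fun f (mapi_aux (fun i a => repl (fun q => P (i :: q)) (fun q => g (i :: q)) a) 0 ts)
  end.


Lemma repl_root (P : pos -> Prop) g (t : tm) : P [] -> repl P g t = g [].
Proof. intros H. destruct t; simpl; destruct (dec (P [])); tauto. Qed.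

Lemma repl_var (P : pos -> Prop) g x : ~ P [] -> repl P g (Var x) = Var x.
Proof. intros H. simpl; destruct (dec (P [])); tauto. Qed.

Lemma repl_fun (P : pos -> Prop) g f ts : ~ P [] ->
  repl P g (Fun f ts) = Fun f (mapi_aux (fun i a => repl (fun q => P (i :: q)) (fun q => g (i :: q)) a) 0 ts).
Proof. intros H. simpl; destruct (dec (P [])); tauto. Qed.

Lemma repl_none (P : pos -> Prop) g (t : tm) : (forall p, ~ P p) -> repl P g t = t.
Proof.
  revert P g. induction t as [x|f ts IH] using term_ind'; intros P g HP.
  - apply repl_var. auto.
  - rewrite repl_fun; auto. f_equal. apply nth_error_ext. intros i.
    rewrite nth_error_mapi. simpl. destruct (nth_error ts i) eqn:E; simpl; auto.
    f_equal. apply IH. eapply nth_error_In; eauto. intros p. apply HP.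
Qed.

Lemma vars_repl (P : pos -> Prop) g (t : tm) x :
  In x (vars (repl P g t)) -> In x (vars t) \/ exists p, P p /\ In x (vars (g p)).
Proof.
  revert P g. induction t as [y|f ts IH] using term_ind'; intros P g Hx.
  - destruct (dec (P [])). rewrite repl_root in Hx; eauto. rewrite repl_var in Hx; auto.
  - destruct (dec (P [])). rewrite repl_root in Hx; eauto. rewrite repl_fun in Hx; auto.
    simpl in Hx. apply in_flat_map in Hx as [b [Hb Hx]].
    apply In_nth_error in Hb as [i Hi]. rewrite nth_error_mapi in Hi. simpl in Hi.
    destruct (nth_error ts i) as [c|] eqn:E; simpl in Hi; try discriminate. injection Hi as <-.
    apply IH in Hx as [Hx|[p [Hp Hx]]].
    + left. simpl. apply in_flat_map. exists c. split; auto. eapply nth_error_In; eauto.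
    + right. exists (i :: p). auto.
    + eapply nth_error_In; eauto.
Qed.

Lemma pr_repl (P0 : pos -> Prop) (g : pos -> tm) (sg : subst) (l : tm) :
  (forall p, P0 p -> posF l p) -> pairwise_parallel P0 ->
  pr P0 (fun p a b => b = app_subst sg (g p)) (app_subst sg l) (app_subst sg (repl P0 g l)).
Proof.
  revert P0 g. induction l as [x|f ts IH] using term_ind'; intros P0 g HF Hpp.
  - assert (HP : forall p, ~ P0 p).
    { intros p Hp. destruct (HF p Hp) as [f [ts Hs]]. destruct p; simpl in Hs; discriminate. }
    rewrite repl_none; auto. apply pr_nil; auto.
  - destruct (dec (P0 [])) as [H0|H0].
    + rewrite repl_root; auto. apply pr_root; auto. split; auto. apply pp_root; auto.
    + rewrite repl_fun; auto. simpl. apply pr_fun; auto.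
      eexists. split. reflexivity. split. rewrite length_map, length_mapi, length_map. auto. split.
      * intros i q Hp. destruct (HF _ Hp) as [f' [ts' Hs]]. simpl in Hs.
        rewrite length_map. destruct (nth_error ts i) eqn:E; try discriminate. apply nth_error_Some. congruence.
      * intros i a b Ha Hb. rewrite nth_error_map in Ha, Hb. rewrite nth_error_mapi in Hb. simpl in Hb.
        destruct (nth_error ts i) as [c|] eqn:E; simpl in Ha, Hb; try discriminate.
        injection Ha as <-. injection Hb as <-. apply IH.
        -- eapply nth_error_In; eauto.
        -- intros p Hp. destruct (HF _ Hp) as [f' [ts' Hs]]. simpl in Hs. rewrite E in Hs. exists f', ts'. auto.
        -- apply pp_shift; auto.
Qed.


Definition isfun (t : tm) := exists f ts, t = Fun f ts.

Definition free (l : tm) (P : pos -> Prop) (x : V) :=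
  In x (vars l) /\ forall p lp, P p -> subterm l p = Some lp -> isfun lp -> ~ In x (vars lp).

Lemma nodup_app_disj {A : Type} (l1 l2 : list A) x : NoDup (l1 ++ l2) -> In x l1 -> In x l2 -> False.
Proof.
  induction l1 as [|a l1 IH]; simpl; intros H H1 H2; auto.
  inversion H; subst. destruct H1 as [<-|H1].
  - apply H4. apply in_or_app. auto.
  - eauto.
Qed.

Lemma lin_uniq (ls : list tm) i j a b x :
  NoDup (flat_map vars ls) -> nth_error ls i = Some a -> nth_error ls j = Some b ->
  In x (vars a) -> In x (vars b) -> i = j.
Proof.
  revert i j; induction ls as [|c ls IH]; intros [|i] [|j] Hnd Ha Hb Hxa Hxb; simpl in *;
    try discriminate; auto.
  - injection Ha as <-. exfalso. eapply nodup_app_disj; eauto. apply in_flat_map.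
    exists b. split; auto. eapply nth_error_In; eauto.
  - injection Hb as <-. exfalso. eapply nodup_app_disj; eauto. apply in_flat_map.
    exists a. split; auto. eapply nth_error_In; eauto.
  - f_equal. eapply IH; eauto. eapply NoDup_app_remove_l; eauto.
Qed.

Lemma lin_sub (ls : list tm) i a : NoDup (flat_map vars ls) -> nth_error ls i = Some a -> NoDup (vars a).
Proof.
  revert i; induction ls as [|c ls IH]; intros [|i] Hnd Ha; simpl in *; try discriminate.
  - injection Ha as <-. eapply NoDup_app_remove_r; eauto.
  - eapply IH; eauto. eapply NoDup_app_remove_l; eauto.
Qed.

Lemma vars_nth (ls : list tm) i a x : nth_error ls i = Some a -> In x (vars a) -> In x (flat_map vars ls).
Proof. intros H Hx. apply in_flat_map. exists a. split; auto. eapply nth_error_In; eauto. Qed.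

Lemma free_lift (P : pos -> Prop) f (ls : list tm) i a x :
  NoDup (flat_map vars ls) -> ~ P [] -> nth_error ls i = Some a ->
  free a (fun q => P (i :: q)) x -> free (Fun f ls) P x.
Proof.
  intros Hnd H0 Ea [Hx Hfr]. split.
  - simpl. eapply vars_nth; eauto.
  - intros [|j p] lp Hp Hs Hf Hxl; [contradiction|]. simpl in Hs.
    destruct (nth_error ls j) as [b|] eqn:Eb; try discriminate.
    destruct (Nat.eq_dec i j) as [<-|Hij].
    + rewrite Ea in Eb. injection Eb as <-. eapply Hfr; eauto.
    + apply Hij. eapply lin_uniq; eauto. eapply subterm_vars; eauto.
Qed.

Lemma posF_cons (l : tm) f ls i a p : l = Fun f ls -> nth_error ls i = Some a -> (posF l (i :: p) <-> posF a p).
Proof. intros -> E. unfold posF. simpl. rewrite E. tauto. Qed.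

Lemma split_lemma (l : tm) : forall (P : pos -> Prop) (Q : pos -> tm -> tm -> Prop) (th : subst) (t : tm) (g : pos -> tm),
  NoDup (vars l) ->
  pr P Q (app_subst th l) t ->
  (forall p lp b, P p -> subterm l p = Some lp -> isfun lp -> Q p (app_subst th lp) b -> b = app_subst th (g p)) ->
  (forall p x, P p -> posF l p -> In x (vars (g p)) -> ~ In x (vars l)) ->
  exists th', (forall x, ~ free l P x -> th' x = th x) /\
    t = app_subst th' (repl (fun p => P p /\ posF l p) g l) /\
    pr (fun p => P p /\ ~ posF l p) Q (app_subst th (repl (fun p => P p /\ posF l p) g l))
       (app_subst th' (repl (fun p => P p /\ posF l p) g l)) /\
    (forall x q, subterm l q = Some (Var x) -> free l P x ->
       pr (fun r => P (q ++ r)) (fun r => Q (q ++ r)) (th x) (th' x)).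
Proof.
  induction l as [x|f ls IH] using term_ind'; intros P Q th t g Hnd Hpr Hg Hdisj.
  -
    assert (HnF : forall p, ~ posF (Var x : tm) p).
    { intros [|i p] [f [ts Hs]]; simpl in Hs; discriminate. }
    exists (fun y => if eqv y x then t else th y). split; [|split; [|split]].
    + intros y Hy. destruct (eqv y x) as [->|]; auto. exfalso. apply Hy. split. simpl; auto.
      intros p lp _ Hs [f [ts ->]]. destruct p; simpl in Hs; discriminate.
    + rewrite repl_var. simpl. destruct (eqv x x); congruence. intros [_ H]; eapply HnF; eauto.
    + rewrite repl_var by (intros [_ H]; eapply HnF; eauto). simpl. destruct (eqv x x); [|congruence].
      eapply pr_ext; [|exact Hpr]. intros p. split; [intros H; split; auto; apply HnF | tauto].
    + intros y q Hs _. destruct q; simpl in Hs; try discriminate. injection Hs as Hxy. subst.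
      match goal with |- context [eqv ?a ?b] => destruct (eqv a b); [|congruence] end. exact Hpr.
  - destruct (dec (P [])) as [H0|H0].
    +
      apply pr_root in Hpr as [Hall HQ]; auto.
      assert (HF0 : posF (Fun f ls) []) by (exists f, ls; reflexivity).
      exists th. split; [|split; [|split]].
      * auto.
      * rewrite repl_root by auto. eapply Hg; eauto. reflexivity. exists f, ls; auto.
      * apply pr_nil. intros p [Hp Hn]. rewrite (Hall p Hp) in Hn. auto. auto.
      * intros x q _ [Hx Hfr]. exfalso. eapply Hfr; eauto. reflexivity. exists f, ls; auto.
    +
      simpl in Hpr. apply pr_fun in Hpr as [ts' [-> [Hlen [Hrange Hsub]]]]; auto.
      rewrite length_map in Hlen, Hrange.
      simpl in Hnd.
      assert (Hspec : forall i, exists thi,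
        (forall x, (forall a, nth_error ls i = Some a -> ~ free a (fun q => P (i :: q)) x) -> thi x = th x) /\
        (forall a b, nth_error ls i = Some a -> nth_error ts' i = Some b ->
          b = app_subst thi (repl (fun p => P (i :: p) /\ posF a p) (fun q => g (i :: q)) a) /\
          pr (fun p => P (i :: p) /\ ~ posF a p) (fun q => Q (i :: q))
             (app_subst th (repl (fun p => P (i :: p) /\ posF a p) (fun q => g (i :: q)) a))
             (app_subst thi (repl (fun p => P (i :: p) /\ posF a p) (fun q => g (i :: q)) a)) /\
          (forall x q, subterm a q = Some (Var x) -> free a (fun q => P (i :: q)) x ->
             pr (fun r => P (i :: q ++ r)) (fun r => Q (i :: q ++ r)) (th x) (thi x)))).
      { intros i. destruct (nth_error ls i) as [a|] eqn:Ea.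
        - destruct (nth_error ts' i) as [b|] eqn:Eb.
          + assert (Hpri : pr (fun q => P (i :: q)) (fun q => Q (i :: q)) (app_subst th a) b).
            { apply Hsub; auto. rewrite nth_error_map, Ea. reflexivity. }
            destruct (IH a (nth_error_In _ _ Ea) (fun q => P (i :: q)) (fun q => Q (i :: q)) th b (fun q => g (i :: q)))
              as [thi [H1 [H2 [H3 H4]]]].
            * eapply lin_sub; eauto.
            * exact Hpri.
            * intros p lp b' Hp Hs Hf HQ. eapply (Hg (i :: p)); eauto. simpl. rewrite Ea. auto.
            * intros p x Hp HpF Hx Hxa. eapply (Hdisj (i :: p)); eauto.
              eapply posF_cons; eauto. simpl. eapply vars_nth; eauto.
            * exists thi. split.
              -- intros x Hx. apply H1. apply Hx. reflexivity.
              -- intros a' b' Ea' Eb'. injection Ea' as <-. injection Eb' as <-. auto.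
          + exists th. split; auto. intros a' b' _ Hb. discriminate.
        - exists th. split; auto. intros a' b' Ha. discriminate. }
      set (Th := fun i => proj1_sig (constructive_indefinite_description _ (Hspec i))).
      assert (HTh : forall i, let thi := Th i in
        (forall x, (forall a, nth_error ls i = Some a -> ~ free a (fun q => P (i :: q)) x) -> thi x = th x) /\
        (forall a b, nth_error ls i = Some a -> nth_error ts' i = Some b ->
          b = app_subst thi (repl (fun p => P (i :: p) /\ posF a p) (fun q => g (i :: q)) a) /\
          pr (fun p => P (i :: p) /\ ~ posF a p) (fun q => Q (i :: q))
             (app_subst th (repl (fun p => P (i :: p) /\ posF a p) (fun q => g (i :: q)) a))
             (app_subst thi (repl (fun p => P (i :: p) /\ posF a p) (fun q => g (i :: q)) a)) /\
          (forall x q, subterm a q = Some (Var x) -> free a (fun q => P (i :: q)) x ->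
             pr (fun r => P (i :: q ++ r)) (fun r => Q (i :: q ++ r)) (th x) (thi x)))).
      { intros i. exact (proj2_sig (constructive_indefinite_description _ (Hspec i))). }
      clearbody Th. clear Hspec.
      set (idx := fun x => match dec (exists i a, nth_error ls i = Some a /\ In x (vars a)) with
                           | left Hx => proj1_sig (constructive_indefinite_description _ Hx)
                           | right _ => 0 end).
      assert (K1 : forall i a x, nth_error ls i = Some a -> In x (vars a) -> idx x = i).
      { intros i a x Ea Hx. unfold idx. destruct (dec _) as [Hx'|Hn].
        - destruct (constructive_indefinite_description _ Hx') as [j [b [Eb Hxb]]]. simpl.
          eapply lin_uniq; eauto.
        - exfalso. apply Hn. eauto. }
      assert (K2 : forall x, (forall i a, nth_error ls i = Some a -> ~ In x (vars a)) -> Th (idx x) x = th x).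
      { intros x Hx. apply (HTh (idx x)). intros a Ea [Hxa _]. eapply Hx; eauto. }
      exists (fun x => Th (idx x) x).
      assert (K3 : forall i a x, nth_error ls i = Some a -> ~ In x (flat_map vars ls) -> Th (idx x) x = Th i x).
      { intros i a x Ea Hx. rewrite K2. symmetry. apply (HTh i). intros a' Ea' [Hxa _]. apply Hx. eapply vars_nth; eauto.
        intros j b Eb Hxb. apply Hx. eapply vars_nth; eauto. }
      assert (Hpred : forall i a, nth_error ls i = Some a ->
         (fun q : pos => P (i :: q) /\ posF (Fun f ls) (i :: q)) = (fun p : pos => P (i :: p) /\ posF a p)).
      { intros i a Ea. apply pred_ext. intros p. rewrite (posF_cons (Fun f ls) f ls i a p); tauto. }
      assert (Hext : forall i a, nth_error ls i = Some a ->
         app_subst (Th i) (repl (fun p => P (i :: p) /\ posF a p) (fun q => g (i :: q)) a) =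
         app_subst (fun x => Th (idx x) x) (repl (fun p => P (i :: p) /\ posF a p) (fun q => g (i :: q)) a)).
      { intros i a Ea. apply app_subst_ext. intros x Hx. apply vars_repl in Hx as [Hx|[p [[Hp HpF] Hx]]].
        - rewrite (K1 i a x); auto.
        - symmetry. eapply K3; eauto. eapply (Hdisj (i :: p)); eauto. eapply posF_cons; eauto. }
      assert (HnP0 : ~ (P [] /\ posF (Fun f ls) [])) by tauto.
      split; [|split; [|split]].
      * intros x Hx. destruct (dec (exists i a, nth_error ls i = Some a /\ In x (vars a))) as [[i [a [Ea Hxa]]]|Hn].
        -- rewrite (K1 i a x Ea Hxa). apply (HTh i). intros a' Ea' Hfr. rewrite Ea in Ea'. injection Ea' as <-.
           apply Hx. eapply free_lift; eauto.
        -- apply K2. intros i a Ea Hxa. apply Hn. eauto.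
      * rewrite repl_fun by auto. simpl. f_equal. apply nth_error_ext. intros i.
        rewrite nth_error_map, nth_error_mapi. simpl.
        destruct (nth_error ls i) as [a|] eqn:Ea; simpl.
        -- destruct (nth_error ts' i) as [b|] eqn:Eb.
           ++ f_equal. destruct (proj2 (HTh i) a b Ea Eb) as [Hb _]. rewrite Hb. rewrite (Hext i a Ea). f_equal. f_equal. symmetry. apply (Hpred i a Ea).
           ++ apply nth_error_None in Eb. assert (i < length ls) by (apply nth_error_Some; congruence). lia.
        -- apply nth_error_None. apply nth_error_None in Ea. lia.
      * rewrite repl_fun by auto. simpl. apply pr_fun. tauto.
        eexists. split. reflexivity. split. rewrite !length_map. auto. split.
        -- intros i q [Hp _]. rewrite length_map, length_mapi. eauto.
        -- intros i a' b' Ha' Hb'. rewrite nth_error_map, nth_error_mapi in Ha', Hb'. simpl in Ha', Hb'.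
           destruct (nth_error ls i) as [a|] eqn:Ea; simpl in Ha', Hb'; try discriminate.
           injection Ha' as <-. injection Hb' as <-.
           assert (i < length ls) by (apply nth_error_Some; congruence).
           destruct (nth_error ts' i) as [b|] eqn:Eb; [|apply nth_error_None in Eb; lia].
           destruct (proj2 (HTh i) a b Ea Eb) as [_ [H3 _]].
           rewrite (Hpred i a Ea), <- (Hext i a Ea).
           eapply pr_ext; [|exact H3]. intros p. rewrite (posF_cons (Fun f ls) f ls i a p); tauto.
      * intros x [|i q] Hs Hfr; simpl in Hs; try discriminate.
        destruct (nth_error ls i) as [a|] eqn:Ea; try discriminate.
        assert (i < length ls) by (apply nth_error_Some; congruence).
        destruct (nth_error ts' i) as [b|] eqn:Eb; [|apply nth_error_None in Eb; lia].
        destruct (proj2 (HTh i) a b Ea Eb) as [_ [_ H4]].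
        assert (Hxa : In x (vars a)) by (eapply subterm_vars; eauto; simpl; auto).
        rewrite (K1 i a x Ea Hxa). apply H4; auto.
        split; auto. intros p lp Hp Hs' Hf. destruct Hfr as [_ Hfr]. apply (Hfr (i :: p)); auto. simpl. rewrite Ea. auto.
Qed.

End S.

Section U.
Context {F V : Type}.
Local Notation tm := (term F V).

Definition eqn := (tm * tm)%type.
Definition unif (E : list eqn) (s : subst) := forall e, In e E -> app_subst s (fst e) = app_subst s (snd e).
Definition pvars (E : list eqn) : list V := flat_map (fun e => vars (fst e) ++ vars (snd e)) E.
Definition nv (E : list eqn) := length (nodup eqv (pvars E)).
Fixpoint size (t : tm) : nat := match t with Var _ => 1 | Fun _ ts => S (list_sum (map size ts)) end.
Definition esize (E : list eqn) := list_sum (map (fun e => size (fst e) + size (snd e)) E).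
Definition MGU (E : list eqn) (s0 : subst) :=
  unif E s0 /\ (forall th, unif E th -> exists de, forall x, th x = app_subst de (s0 x)) /\
  (forall y, ~ In y (pvars E) -> s0 y = Var y) /\
  (forall y z, In y (pvars E) -> In z (vars (s0 y)) -> In z (pvars E)).

Lemma MGU_equiv E1 E2 s : (forall s, unif E1 s <-> unif E2 s) -> (forall x, In x (pvars E1) <-> In x (pvars E2)) ->
  MGU E1 s -> MGU E2 s.
Proof.
  intros HU HP [H1 [H2 [H3 H4]]]. split; [|split; [|split]].
  - apply HU; auto.
  - intros th Hth. apply H2. apply HU; auto.
  - intros y Hy. apply H3. rewrite HP. auto.
  - intros y z Hy Hz. apply HP. apply (H4 y); auto. apply HP; auto.
Qed.

Lemma nv_le E1 E2 : incl (pvars E1) (pvars E2) -> nv E1 <= nv E2.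
Proof.
  intros H. unfold nv. apply NoDup_incl_length. apply NoDup_nodup.
  intros z Hz. apply nodup_In. apply nodup_In in Hz. auto.
Qed.

Lemma nv_lt E1 E2 x : incl (pvars E1) (pvars E2) -> In x (pvars E2) -> ~ In x (pvars E1) -> nv E1 < nv E2.
Proof.
  intros H Hx Hnx. unfold nv.
  change (length (x :: nodup eqv (pvars E1)) <= length (nodup eqv (pvars E2))).
  apply NoDup_incl_length.
  - constructor. rewrite nodup_In. auto. apply NoDup_nodup.
  - intros z [<-|Hz]; apply nodup_In; auto. apply nodup_In in Hz. auto.
Qed.

Lemma size_pos (t : tm) : 1 <= size t.
Proof. destruct t; simpl; lia. Qed.

Lemma size_in (a : tm) l : In a l -> size a <= list_sum (map size l).
Proof. induction l as [|b l IH]; simpl; intros H; [contradiction|destruct H as [<-|H]]; try lia. specialize (IH H). lia. Qed.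

Lemma size_var_le (th : subst) (t : tm) x : In x (vars t) -> size (th x) <= size (app_subst th t).
Proof.
  induction t as [y|f ts IH] using term_ind'; simpl; intros Hx.
  - destruct Hx as [<-|[]]. auto.
  - apply in_flat_map in Hx as [a [Ha Hx]]. specialize (IH a Ha Hx).
    assert (size (app_subst th a) <= list_sum (map size (map (app_subst th) ts))).
    { apply size_in. apply in_map. auto. }
    lia.
Qed.

Lemma occurs (th : subst) (b : tm) x : In x (vars b) -> b <> Var x -> size (th x) < size (app_subst th b).
Proof.
  destruct b as [y|f ts]; simpl; intros Hx Hb.
  - destruct Hx as [<-|[]]. congruence.
  - apply in_flat_map in Hx as [a [Ha Hx]]. pose proof (size_var_le th a x Hx).
    assert (size (app_subst th a) <= list_sum (map size (map (app_subst th) ts))).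
    { apply size_in. apply in_map. auto. }
    lia.
Qed.

Lemma main_ind (Pr : list eqn -> Prop) :
  (forall E, (forall E', nv E' < nv E -> Pr E') -> (forall E', nv E' <= nv E -> esize E' < esize E -> Pr E') -> Pr E) ->
  forall E, Pr E.
Proof.
  intros H.
  assert (G : forall n m E, nv E < n -> esize E < m -> Pr E).
  { induction n as [|n IHn]; [intros; lia|]. intros m. induction m as [|m IHm]; [intros; lia|].
    intros E Hn Hm. apply H.
    - intros E' HE'. apply (IHn (S (esize E'))); lia.
    - intros E' H1 H2. apply IHm; lia. }
  intros E. apply (G (S (nv E)) (S (esize E))); lia.
Qed.

Lemma MGU_nil : MGU [] (@Var F V).
Proof.
  split; [|split; [|split]].
  - intros e [].
  - intros th _. exists th. intros x. reflexivity.
  - auto.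
  - intros y z [].
Qed.

Lemma var_elim x (b : tm) E' : b <> Var x -> (exists th, unif ((Var x, b) :: E') th) ->
  (forall E'', nv E'' < nv ((Var x, b) :: E') -> (exists th, unif E'' th) -> exists s, MGU E'' s) ->
  exists s, MGU ((Var x, b) :: E') s.
Proof.
  intros Hb [th Hth] IH.
  set (E := (Var x, b) :: E').
  assert (Hxb : ~ In x (vars b)).
  { intros Hx. pose proof (occurs th b x Hx Hb). specialize (Hth _ (or_introl eq_refl)). simpl in Hth.
    rewrite Hth in H. lia. }
  set (sb := fun y => if eqv y x then b else Var y).
  set (E'' := map (fun e => (app_subst sb (fst e), app_subst sb (snd e))) E').
  assert (Hcomp : forall th' (t : tm), th' x = app_subst th' b -> app_subst th' (app_subst sb t) = app_subst th' t).
  { intros th' t Hx. rewrite app_subst_comp. apply app_subst_ext. intros y _. unfold sb.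
    destruct (eqv y x) as [->|]; auto. }
  assert (HxE : In x (pvars E)) by (simpl; auto).
  assert (HvE'' : forall z, In z (pvars E'') -> In z (pvars E) /\ z <> x).
  { intros z Hz. unfold E'', pvars in Hz. rewrite flat_map_concat_map, map_map, <- flat_map_concat_map in Hz.
    apply in_flat_map in Hz as [e [He Hz]]. simpl in Hz.
    assert (Hgen : forall t : tm, In t [fst e; snd e] -> In z (vars (app_subst sb t)) -> In z (pvars E) /\ z <> x).
    { intros t Ht Hzt. apply vars_subst in Hzt as [y [Hy Hzy]]. unfold sb in Hzy.
      destruct (eqv y x) as [->|Hyx].
      - split. unfold E, pvars. simpl. right. apply in_or_app. left. auto. intros ->. auto.
      - simpl in Hzy. destruct Hzy as [<-|[]]. split; auto. unfold E, pvars. simpl. right.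
        apply in_or_app. right.
        apply in_flat_map. exists e. split; auto. apply in_or_app.
        destruct Ht as [<-|[<-|[]]]; auto. }
    apply in_app_or in Hz as [Hz|Hz]; eapply Hgen; eauto; simpl; auto. }
  assert (Hlt : nv E'' < nv E).
  { apply (nv_lt E'' E x); auto. intros z Hz. apply HvE''; auto. intros Hx. apply HvE'' in Hx as [_ []]. auto. }
  assert (HthE'' : forall th', unif E th' -> unif E'' th').
  { intros th' Hu e He. unfold E'' in He. apply in_map_iff in He as [e0 [<- He0]]. simpl.
    assert (Hx : th' x = app_subst th' b) by (apply (Hu _ (or_introl eq_refl))).
    rewrite !Hcomp by auto. apply Hu. simpl; auto. }
  destruct (IH E'' Hlt (ex_intro _ th (HthE'' th Hth))) as [s' [U1 [U2 [U3 U4]]]].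
  exists (fun y => if eqv y x then app_subst s' b else s' y).
  set (s0 := fun y => if eqv y x then app_subst s' b else s' y).
  assert (Hs0 : forall t : tm, app_subst s0 t = app_subst s' (app_subst sb t)).
  { intros t. rewrite app_subst_comp. apply app_subst_ext. intros y _. unfold s0, sb.
    destruct (eqv y x); auto. }
  assert (Hsbb : app_subst sb b = b).
  { rewrite <- (app_subst_id b) at 2. apply app_subst_ext. intros y Hy. unfold sb.
    destruct (eqv y x) as [->|]; auto. contradiction. }
  split; [|split; [|split]].
  - intros e [<-|He].
    + simpl. unfold s0. destruct (eqv x x); [|congruence]. rewrite Hs0, Hsbb. auto.
    + rewrite !Hs0. apply (U1 (app_subst sb (fst e), app_subst sb (snd e))). unfold E''. apply in_map_iff. exists e. auto.
  - intros th' Hu. destruct (U2 th' (HthE'' th' Hu)) as [de Hde]. exists de. intros y.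
    unfold s0. destruct (eqv y x) as [->|]; auto.
    assert (Hx : th' x = app_subst th' b) by (apply (Hu _ (or_introl eq_refl))).
    rewrite Hx, app_subst_comp. apply app_subst_ext. auto.
  - intros y Hy. unfold s0. destruct (eqv y x) as [->|Hyx]. contradiction.
    apply U3. intros Hy'. apply HvE'' in Hy'. tauto.
  - intros y z Hy Hz. unfold s0 in Hz. destruct (eqv y x) as [->|Hyx].
    + apply vars_subst in Hz as [w [Hw Hzw]].
      destruct (in_dec eqv w (pvars E'')) as [Hw''|Hw''].
      * apply HvE''. eapply U4; eauto.
      * rewrite U3 in Hzw by auto. destruct Hzw as [<-|[]]. simpl. right. apply in_or_app. auto.
    + destruct (in_dec eqv y (pvars E'')) as [Hy''|Hy''].
      * apply HvE''. eapply U4; eauto.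
      * rewrite U3 in Hz by auto. destruct Hz as [<-|[]]. auto.
Qed.

Lemma combine_unif (as_ bs : list tm) (h : tm -> tm) : length as_ = length bs ->
  (map h as_ = map h bs <-> forall a b, In (a, b) (combine as_ bs) -> h a = h b).
Proof.
  revert bs; induction as_ as [|a as_ IH]; intros [|b bs] Hl; simpl in *; try discriminate.
  - split; auto. intros _ a b [].
  - injection Hl as Hl. split.
    + intros H. injection H as H1 H2. intros a' b' [Hab|Hin].
      * injection Hab as <- <-. auto.
      * apply (IH bs Hl); auto.
    + intros H. f_equal. apply H; auto. apply (IH bs Hl). intros. apply H. auto.
Qed.

Lemma combine_pvars (as_ bs : list tm) z : length as_ = length bs ->
  (In z (pvars (combine as_ bs)) <-> In z (flat_map vars as_ ++ flat_map vars bs)).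
Proof.
  revert bs; induction as_ as [|a as_ IH]; intros [|b bs] Hl; simpl in *; try discriminate.
  - tauto.
  - injection Hl as Hl. unfold pvars in *. simpl. specialize (IH bs Hl).
    rewrite !in_app_iff in *. tauto.
Qed.

Lemma combine_esize (as_ bs : list tm) : length as_ = length bs ->
  esize (combine as_ bs) = list_sum (map size as_) + list_sum (map size bs).
Proof.
  revert bs; induction as_ as [|a as_ IH]; intros [|b bs] Hl; simpl in *; try discriminate; auto.
  injection Hl as Hl. unfold esize in *. simpl. rewrite IH; auto. lia.
Qed.

Lemma pvars_app E1 E2 : pvars (E1 ++ E2) = pvars E1 ++ pvars E2.
Proof. unfold pvars. apply flat_map_app. Qed.

Lemma esize_app E1 E2 : esize (E1 ++ E2) = esize E1 + esize E2.
Proof. unfold esize. rewrite map_app, list_sum_app. auto. Qed.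

Lemma unif_cons e E s : unif (e :: E) s <-> app_subst s (fst e) = app_subst s (snd e) /\ unif E s.
Proof.
  split.
  - intros H. split. apply H; simpl; auto. intros e' He'. apply H; simpl; auto.
  - intros [H1 H2] e' [<-|He']; auto.
Qed.

Lemma unif_app E1 E2 s : unif (E1 ++ E2) s <-> unif E1 s /\ unif E2 s.
Proof.
  split.
  - intros H. split; intros e He; apply H; apply in_or_app; auto.
  - intros [H1 H2] e He. apply in_app_or in He as [He|He]; auto.
Qed.

Theorem robinson (E : list eqn) : (exists th, unif E th) -> exists s, MGU E s.
Proof.
  revert E. apply (main_ind (fun E => (exists th, unif E th) -> exists s, MGU E s)). intros E IHv IHs Hex.
  destruct E as [|[a b] E']. { exists Var. apply MGU_nil. }
  destruct a as [x|f as_].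
  - destruct (dec (b = Var x)) as [->|Hb].
    + destruct (IHs E') as [s [U1 [U2 [U3 U4]]]].
      * apply nv_le. intros z Hz. unfold pvars in *. simpl. auto.
      * unfold esize. simpl. pose proof (size_pos (Var x : tm)). simpl in *. lia.
      * destruct Hex as [th Hth]. exists th. apply unif_cons in Hth. tauto.
      * exists s. split; [|split; [|split]].
        -- apply unif_cons. auto.
        -- intros th Hth. apply U2. apply unif_cons in Hth. tauto.
        -- intros y Hy. apply U3. intros H. apply Hy. simpl. auto.
        -- intros y z Hy Hz. simpl in Hy.
           destruct (in_dec eqv y (pvars E')) as [Hy'|Hy'].
           ++ simpl. right. right. eapply U4; eauto.
           ++ rewrite U3 in Hz by auto. destruct Hz as [<-|[]]. auto.
    + apply var_elim; auto.
  - destruct b as [y|g bs].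
    + destruct (var_elim y (Fun f as_) E') as [s Hs].
      * discriminate.
      * destruct Hex as [th Hth]. exists th. apply unif_cons in Hth as [H1 H2]. apply unif_cons. simpl in *. auto.
      * intros E'' Hlt Hex''. apply IHv; auto. eapply Nat.lt_le_trans; [exact Hlt|].
        apply nv_le. intros z Hz. unfold pvars in *. simpl in *. rewrite !in_app_iff in *. simpl. tauto.
      * exists s. revert Hs. apply MGU_equiv.
        -- intros s'. rewrite !unif_cons. simpl. intuition.
        -- intros z. unfold pvars. simpl. rewrite !in_app_iff. simpl. tauto.
    + destruct Hex as [th Hth]. pose proof (proj1 (proj1 (unif_cons _ _ _) Hth)) as Hh. simpl in Hh.
      injection Hh as Hfg Hmap. subst g.
      assert (Hl : length as_ = length bs).
      { apply (f_equal (@length _)) in Hmap. rewrite !length_map in Hmap. auto. }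
      destruct (IHs (combine as_ bs ++ E')) as [s Hs].
      * apply nv_le. intros z Hz. rewrite pvars_app in Hz. apply in_app_or in Hz as [Hz|Hz].
        -- apply combine_pvars in Hz; auto. unfold pvars. simpl. rewrite !in_app_iff in *. tauto.
        -- unfold pvars in *. simpl. rewrite !in_app_iff. tauto.
      * rewrite esize_app, combine_esize; auto. unfold esize. simpl. lia.
      * exists th. apply unif_app. split.
        -- intros [a b] Hab. apply (combine_unif as_ bs (app_subst th) Hl); auto.
        -- apply unif_cons in Hth. tauto.
      * exists s. revert Hs. apply MGU_equiv.
        -- intros s'. rewrite unif_app, unif_cons. simpl. split.
           ++ intros [H1 H2]. split; auto. f_equal. apply combine_unif; auto. intros a b Hab. apply (H1 (a, b)). auto.
           ++ intros [H1 H2]. split; auto. injection H1 as H1. intros [a b] Hab. apply (combine_unif as_ bs _ Hl); auto.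
        -- intros z. rewrite pvars_app, in_app_iff, combine_pvars by auto. unfold pvars. simpl. rewrite !in_app_iff. tauto.
Qed.

End U.

Section C.
Context {F V : Type}.
Local Notation tm := (term F V).

Fixpoint allpos (t : tm) : list pos :=
  [] :: match t with Var _ => [] | Fun _ ts => concat (mapi_aux (fun i a => map (cons i) (allpos a)) 0 ts) end.

Lemma allpos_complete (t : tm) p : subterm t p <> None -> In p (allpos t).
Proof.
  revert t; induction p as [|i p IH]; intros t H; [destruct t; simpl; auto|].
  destruct t as [x|f ts]; simpl in H; [exfalso; apply H; reflexivity|].
  destruct (nth_error ts i) as [a|] eqn:E; [|exfalso; apply H; reflexivity]. simpl.
  right. apply in_concat. exists (map (cons i) (allpos a)). split.
  - apply nth_error_In with i. rewrite nth_error_mapi, E. reflexivity.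
  - apply in_map. apply IH. auto.
Qed.

Lemma fresh_list (Vinf : forall l : list V, exists x, ~ In x l) n (avoid : list V) :
  exists Z, length Z = n /\ NoDup Z /\ forall z, In z Z -> ~ In z avoid.
Proof.
  induction n as [|n [Z [H1 [H2 H3]]]].
  - exists []. split; [reflexivity|split]. constructor. intros z [].
  - destruct (Vinf (avoid ++ Z)) as [x Hx]. exists (x :: Z). split; [simpl; auto|split].
    + constructor; auto. intros H. apply Hx. apply in_or_app. auto.
    + intros z [<-|Hz]; auto. intros H. apply Hx. apply in_or_app. auto.
Qed.

Fixpoint sw (X Z : list V) (y : V) : V :=
  match X, Z with
  | x :: X', z :: Z' => if eqv y x then z else if eqv y z then x else sw X' Z' y
  | _, _ => y
  end.

Lemma sw_range X Z y : sw X Z y = y \/ In (sw X Z y) X \/ In (sw X Z y) Z.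
Proof.
  revert Z; induction X as [|x X IH]; intros [|z Z]; simpl; auto.
  destruct (eqv y x); [simpl; auto|]. destruct (eqv y z); [simpl; auto|].
  destruct (IH Z) as [H|[H|H]]; auto.
Qed.

Lemma sw_inv X Z y : NoDup X -> NoDup Z -> (forall v, In v X -> ~ In v Z) -> sw X Z (sw X Z y) = y.
Proof.
  revert Z; induction X as [|x X IH]; intros [|z Z] HX HZ Hd; simpl; auto.
  inversion HX; inversion HZ; subst.
  assert (Hxz : x <> z) by (intros <-; apply (Hd x); simpl; auto).
  destruct (eqv y x) as [->|Hyx].
  - destruct (eqv z x); [congruence|]. destruct (eqv z z); congruence.
  - destruct (eqv y z) as [->|Hyz].
    + destruct (eqv x x); congruence.
    + set (w := sw X Z y).
      assert (Hwx : w <> x).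
      { destruct (sw_range X Z y) as [H|[H|H]]; unfold w; [rewrite H; auto| |].
        - intros E; rewrite E in H; auto.
        - intros E; rewrite E in H. apply (Hd x); simpl; auto. }
      assert (Hwz : w <> z).
      { destruct (sw_range X Z y) as [H|[H|H]]; unfold w; [rewrite H; auto| |].
        - intros E; rewrite E in H. apply (Hd z); simpl; auto.
        - intros E; rewrite E in H; auto. }
      destruct (eqv w x); [congruence|]. destruct (eqv w z); [congruence|].
      apply IH; auto. intros v Hv Hv'. apply (Hd v); simpl; auto.
Qed.

Lemma sw_img X Z x : length X = length Z -> (forall v, In v X -> ~ In v Z) -> In x X -> In (sw X Z x) Z.
Proof.
  revert Z; induction X as [|a X IH]; intros [|z Z] Hl Hd Hx; simpl in *; try discriminate; try contradiction.
  destruct (eqv x a) as [->|Hxa]; auto.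
  destruct Hx as [<-|Hx]; [congruence|].
  destruct (eqv x z) as [->|Hxz].
  - exfalso. apply (Hd z); auto.
  - right. apply IH; auto. intros v Hv Hv'. apply (Hd v); auto.
Qed.

Lemma rename_apart (Vinf : forall l : list V, exists x, ~ In x l) (qs : list pos) (X : pos -> list V) :
  forall avoid : list V,
  exists pi : pos -> V -> V,
    (forall q y, pi q (pi q y) = y) /\
    (forall q x, In q qs -> In x (X q) -> ~ In (pi q x) avoid) /\
    (forall q1 q2 x1 x2, In q1 qs -> In q2 qs -> q1 <> q2 -> In x1 (X q1) -> In x2 (X q2) -> pi q1 x1 <> pi q2 x2).
Proof.
  induction qs as [|q qs IH]; intros avoid.
  - exists (fun _ y => y). split; [auto|split]; intros; contradiction.
  - set (Xn := nodup eqv (X q)).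
    destruct (fresh_list Vinf (length Xn) (avoid ++ Xn)) as [Z [HZl [HZnd HZav]]].
    assert (Hd : forall v, In v Xn -> ~ In v Z).
    { intros v Hv Hv'. apply (HZav v Hv'). apply in_or_app. auto. }
    destruct (IH (avoid ++ Z)) as [pi [H1 [H2 H3]]].
    exists (fun q' => if list_eq_dec Nat.eq_dec q' q then sw Xn Z else pi q').
    assert (Himg : forall x, In x (X q) -> In (sw Xn Z x) Z).
    { intros x Hx. apply sw_img; auto. apply nodup_In. auto. }
    split; [|split].
    + intros q' y. destruct (list_eq_dec Nat.eq_dec q' q); auto. apply sw_inv; auto. apply NoDup_nodup.
    + intros q' x Hq' Hx. destruct (list_eq_dec Nat.eq_dec q' q) as [->|Hne].
      * intros Hav. apply (HZav _ (Himg x Hx)). apply in_or_app. auto.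
      * destruct Hq' as [<-|Hq']; [congruence|]. intros Hav. apply (H2 q' x Hq' Hx). apply in_or_app. auto.
    + intros q1 q2 x1 x2 Hq1 Hq2 Hne Hx1 Hx2.
      destruct (list_eq_dec Nat.eq_dec q1 q) as [->|Hne1]; destruct (list_eq_dec Nat.eq_dec q2 q) as [->|Hne2].
      * congruence.
      * destruct Hq2 as [<-|Hq2]; [congruence|]. intros E. apply (H2 q2 x2 Hq2 Hx2). rewrite <- E.
        apply in_or_app. right. auto.
      * destruct Hq1 as [<-|Hq1]; [congruence|]. intros E. apply (H2 q1 x1 Hq1 Hx1). rewrite E.
        apply in_or_app. right. auto.
      * destruct Hq1 as [<-|Hq1]; [congruence|]. destruct Hq2 as [<-|Hq2]; [congruence|]. auto.
Qed.

Definition ren (pi : V -> V) (rl : @rule F V) : @rule F V :=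
  mkRule (app_subst (fun x => Var (pi x)) (lhs rl)) (app_subst (fun x => Var (pi x)) (rhs rl)).

Lemma ren_invol (pi : V -> V) (t : tm) : (forall y, pi (pi y) = y) ->
  app_subst (fun x => Var (pi x)) (app_subst (fun x => Var (pi x)) t) = t.
Proof.
  intros H. rewrite app_subst_comp. simpl. rewrite <- (app_subst_id t) at 2.
  apply app_subst_ext. intros x _. rewrite H. auto.
Qed.

Lemma variant_ren pi (rl : @rule F V) : (forall y, pi (pi y) = y) -> variant (ren pi rl) rl.
Proof. intros H. exists pi, pi. auto. Qed.

Lemma variant_ren_back pi (rl rl0 : @rule F V) : (forall y, pi (pi y) = y) -> variant (ren pi rl) rl0 -> variant rl rl0.
Proof.
  intros Hpi [a [a' [H1 [H2 [H3 H4]]]]].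
  exists (fun x => pi (a x)), (fun x => a' (pi x)). split; [|split; [|split]].
  - intros x. rewrite Hpi. auto.
  - intros x. rewrite H2. auto.
  - rewrite <- (ren_invol pi (lhs rl) Hpi). change (app_subst (fun x => Var (pi x)) (lhs (ren pi rl)) = app_subst (fun x => Var (pi (a x))) (lhs rl0)).
    rewrite H3, app_subst_comp. reflexivity.
  - rewrite <- (ren_invol pi (rhs rl) Hpi). change (app_subst (fun x => Var (pi x)) (rhs (ren pi rl)) = app_subst (fun x => Var (pi (a x))) (rhs rl0)).
    rewrite H4, app_subst_comp. reflexivity.
Qed.

Definition Qrho (R : @rule F V -> Prop) (rho : pos -> @rule F V) (p : pos) (a b : tm) : Prop :=
  R (rho p) /\ exists mu, a = app_subst mu (lhs (rho p)) /\ b = app_subst mu (rhs (rho p)).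

Lemma psw_pr R P rho (s t : tm) : par_step_with R P rho s t <-> pr P (Qrho R rho) s t.
Proof.
  split.
  - intros [H1 [H2 H3]]. split; [|split]; auto. intros p Hp. destruct (H2 p Hp) as [HR [mu [Hs Ht]]].
    do 2 eexists. split; [exact Hs|]. split; [exact Ht|]. split; eauto.
  - intros [H1 [H2 H3]]. split; [|split]; auto. intros p Hp. destruct (H2 p Hp) as [a [b [Ha [Hb [HR [mu [-> ->]]]]]]].
    split; eauto.
Qed.

Definition Qany (R : @rule F V -> Prop) (a b : tm) : Prop :=
  exists rl, R rl /\ exists mu, a = app_subst mu (lhs rl) /\ b = app_subst mu (rhs rl).

Lemma pr_par_step R P (s t : tm) (d : @rule F V) : pr P (fun _ => Qany R) s t -> par_step R P s t.
Proof.
  intros Hpr.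
  assert (Hc : forall p, exists rl, P p -> exists a b, subterm s p = Some a /\ subterm t p = Some b /\
              R rl /\ exists mu, a = app_subst mu (lhs rl) /\ b = app_subst mu (rhs rl)).
  { intros p. destruct (dec (P p)) as [Hp|Hp].
    - destruct Hpr as [_ [H2 _]]. destruct (H2 p Hp) as [a [b [Ha [Hb [rl [HR Hmu]]]]]].
      exists rl. intros _. eauto 7.
    - exists d. tauto. }
  exists (fun p => proj1_sig (constructive_indefinite_description _ (Hc p))).
  apply psw_pr. destruct Hpr as [H1 [H2 H3]]. split; [|split]; auto.
  intros p Hp. unfold Qrho. cbv beta. destruct (constructive_indefinite_description _ (Hc p)) as [rl Hrl]. simpl.
  destruct (Hrl Hp) as [a [b [Ha [Hb [HR Hmu]]]]]. eauto 6.
Qed.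

Lemma Qrho_any R rho p (a b : tm) : Qrho R rho p a b -> Qany R a b.
Proof. intros [HR Hmu]. exists (rho p). auto. Qed.

Lemma par_step_empty R (s : tm) : par_step R (fun _ => False) s s.
Proof.
  exists (fun _ => mkRule s s). apply psw_pr. apply pr_nil; auto.
Qed.

Lemma subst_agree_lhs (l : tm) (m1 m2 : subst) : app_subst m1 l = app_subst m2 l -> forall x, In x (vars l) -> m1 x = m2 x.
Proof.
  induction l as [y|f ts IH] using term_ind'; simpl; intros H x Hx.
  - destruct Hx as [<-|[]]. auto.
  - injection H as H. apply in_flat_map in Hx as [a [Ha Hx]]. apply (IH a Ha); auto.
    apply In_nth_error in Ha as [i Hi].
    assert (E1 := f_equal (fun l => nth_error l i) H). simpl in E1. rewrite !nth_error_map, Hi in E1.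
    simpl in E1. congruence.
Qed.

End C.

Theorem lemma3 (F V : Type)
  (V_infinite : forall l : list V, exists x, ~ In x l)
  (R : @rule F V -> Prop) (HR : TRS R)
  (lr : @rule F V) (Hlr : wf_rule lr) (Hll : left_linear lr)
  (s t u : term F V) (P : pos -> Prop) (rho : pos -> @rule F V)
  (Hpar : par_step_with R P rho s t) (Hroot : root_step lr s u) :
  (orthogonal_peak lr P rho ->
     exists (v : term F V) (P' : pos -> Prop),
       (t = v \/ root_step lr t v) /\ par_step R P' u v /\
       (forall x, vars_at v P' x -> vars_at s P x)) /\
  (~ orthogonal_peak lr P rho ->
     exists (s0 t0 u0 : term F V) (P0 : pos -> Prop) (sg tau : subst),
       par_critical_peak R (fun rl => rl = lr) t0 P0 s0 u0 /\
       s = app_subst sg s0 /\ t = app_subst tau t0 /\ u = app_subst sg u0 /\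
       par_step_subst R sg tau /\
       par_step R (fun p => P p /\ ~ P0 p) (app_subst sg t0) (app_subst tau t0) /\
       (forall p, P0 p -> P p)).
Proof.
  destruct Hroot as [mu [Hs Hu]].
  apply psw_pr in Hpar.
  destruct Hlr as [HlnV Hrl].
  unfold left_linear in Hll.
  set (l := lhs lr) in *. set (r := rhs lr) in *.
  assert (HQvars : forall p a b x, Qrho R rho p a b -> In x (vars b) -> In x (vars a)).
  { intros p a b x [HRp [m [-> ->]]] Hx. apply vars_subst in Hx as [y [Hy Hxy]].
    apply vars_subst. exists y. split; auto. apply (proj2 (HR _ HRp)). auto. }
  split.
  -
    intros [HA1|[HA2 HA2v]].
    + assert (HnP0 : forall p, ~ (P p /\ posF l p)) by (intros p [Hp HF]; eapply HA1; eauto).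
      destruct (split_lemma l P (Qrho R rho) mu t (fun _ => l)) as [th' [S1 [S2 [S3 S4]]]].
      * exact Hll.
      * rewrite <- Hs. exact Hpar.
      * intros p lp b Hp Hsub [f [ts ->]]. exfalso. apply (HA1 p Hp). exists f, ts. auto.
      * intros p x Hp HF. exfalso. eapply HA1; eauto.
      * rewrite repl_none in S2 by auto.
        set (posx := fun x => match dec (exists q, subterm l q = Some (Var x)) with
                              | left H => proj1_sig (constructive_indefinite_description _ H)
                              | right _ => [] end).
        assert (Hposx : forall x, In x (vars l) -> subterm l (posx x) = Some (Var x)).
        { intros x Hx. unfold posx. destruct (dec _) as [H|H].
          - exact (proj2_sig (constructive_indefinite_description _ H)).
          - exfalso. apply H. apply var_pos. auto. }
        assert (Hfree : forall x, In x (vars l) -> free l P x).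
        { intros x Hx. split; auto. intros p lp Hp Hsub [f [ts ->]]. exfalso. apply (HA1 p Hp). exists f, ts. auto. }
        exists (app_subst th' r).
        exists (fun p => exists q x r', p = q ++ r' /\ subterm r q = Some (Var x) /\ P (posx x ++ r')).
        split; [right; exists th'; auto|split].
        -- apply (pr_par_step _ _ _ _ lr). rewrite Hu.
           apply (pr_compose (Qany R) (fun x r' => P (posx x ++ r'))). intros x Hx.
           assert (Hxl : In x (vars l)) by (apply Hrl; auto).
           eapply pr_mono; [|apply (S4 x (posx x) (Hposx x Hxl) (Hfree x Hxl))].
           intros p a b _ HQ. eapply Qrho_any. exact HQ.
        -- intros x [p [t' [[q [y [r' [-> [Hq HPy]]]]] [Hsub Hx]]]].
           rewrite (subterm_subst_var th' r q y r' Hq) in Hsub.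
           assert (Hyl : In y (vars l)) by (apply Hrl; eapply subterm_vars; eauto; simpl; auto).
           assert (Ht' : subterm t (posx y ++ r') = Some t').
           { rewrite S2. rewrite (subterm_subst_var th' l (posx y) y r' (Hposx y Hyl)). auto. }
           destruct Hpar as [_ [H2 _]]. destruct (H2 _ HPy) as [a [b [Ha [Hb HQ]]]].
           rewrite Ht' in Hb. injection Hb as <-.
           exists (posx y ++ r'), a. split; auto. split; auto. eapply HQvars; eauto.
    + exists u, (fun _ => False). split; [left|split].
      * assert (H0 : P []) by (apply HA2; auto).
        apply pr_root in Hpar as [_ [HRp [m [Hsm Htm]]]]; auto.
        destruct HA2v as [pi [pi' [_ [_ [Hl Hr]]]]].
        rewrite Hl in Hsm. rewrite Hr in Htm. rewrite app_subst_comp in Hsm, Htm. simpl in Hsm, Htm.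
        rewrite Hs in Hsm.
        pose proof (subst_agree_lhs l _ _ Hsm) as Hag.
        rewrite Htm, Hu. symmetry. apply app_subst_ext. intros x Hx. apply Hag. apply Hrl. auto.
      * apply par_step_empty.
      * intros x [p [_ [[] _]]].
  -
    intros HnO. unfold orthogonal_peak in HnO.
    assert (HnA1 : exists p, P p /\ posF l p).
    { apply NNPP. intros Hn. apply HnO. left. intros p Hp HF. apply Hn. eauto. }
    assert (HnA2 : ~ ((forall p, P p <-> p = []) /\ variant (rho []) lr)) by tauto.
    assert (Hpp : pairwise_parallel P) by (apply Hpar).
    set (P0 := fun p => P p /\ posF l p).
    set (Xr := fun p => vars (lhs (rho p)) ++ vars (rhs (rho p))).
    destruct (rename_apart V_infinite (allpos l) Xr (vars l ++ vars r)) as [pi [Hinv [Havoid Hdis]]].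
    set (rho0 := fun p => ren (pi p) (rho p)).
    assert (F1 : forall p z, rule_vars (rho0 p) z -> exists x, In x (Xr p) /\ z = pi p x).
    { intros p z [Hz|Hz]; simpl in Hz; apply vars_subst in Hz as [x [Hx Hzx]]; simpl in Hzx;
        destruct Hzx as [<-|[]]; exists x; split; auto; unfold Xr; apply in_or_app; auto. }
    assert (F2 : forall p, P0 p -> In p (allpos l)).
    { intros p [_ [f [ts Hf]]]. apply allpos_complete. congruence. }
    assert (F3 : forall p z, P0 p -> rule_vars (rho0 p) z -> ~ rule_vars lr z).
    { intros p z Hp Hz Hz'. destruct (F1 p z Hz) as [x [Hx ->]]. apply (Havoid p x (F2 p Hp) Hx).
      apply in_or_app. destruct Hz'; auto. }
    assert (F4 : forall p q z, P0 p -> P0 q -> p <> q -> rule_vars (rho0 p) z -> ~ rule_vars (rho0 q) z).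
    { intros p q z Hp Hq Hne Hz Hz'. destruct (F1 p z Hz) as [x [Hx ->]]. destruct (F1 q _ Hz') as [y [Hy Hxy]].
      apply (Hdis p q x y (F2 p Hp) (F2 q Hq) Hne Hx Hy). auto. }
    assert (HRp : forall p, P p -> R (rho p)).
    { intros p Hp. destruct Hpar as [_ [H2 _]]. destruct (H2 p Hp) as [a [b [_ [_ [HRp _]]]]]. auto. }
    assert (Hmus : forall p, exists m, P p -> subterm s p = Some (app_subst m (lhs (rho p))) /\
                                            subterm t p = Some (app_subst m (rhs (rho p)))).
    { intros p. destruct (dec (P p)) as [Hp|Hp].
      - destruct Hpar as [_ [H2 _]]. destruct (H2 p Hp) as [a [b [Ha [Hb [_ [m [-> ->]]]]]]]. eauto.
      - exists mu. tauto. }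
    set (MU := fun p => proj1_sig (constructive_indefinite_description _ (Hmus p))).
    assert (HMU : forall p, P p -> subterm s p = Some (app_subst (MU p) (lhs (rho p))) /\
                                   subterm t p = Some (app_subst (MU p) (rhs (rho p)))).
    { intros p. exact (proj2_sig (constructive_indefinite_description _ (Hmus p))). }
    clearbody MU. clear Hmus.
    set (th := fun z => match dec (exists p, P0 p /\ rule_vars (rho0 p) z) with
                        | left H => let p := proj1_sig (constructive_indefinite_description _ H) in MU p (pi p z)
                        | right _ => mu z end).
    assert (Th1 : forall z, In z (vars l) -> th z = mu z).
    { intros z Hz. unfold th. destruct (dec _) as [[p [Hp Hzp]]|_]; auto.
      exfalso. eapply F3; eauto. left. auto. }
    assert (Th2 : forall p z, P0 p -> rule_vars (rho0 p) z -> th z = MU p (pi p z)).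
    { intros p z Hp Hz. unfold th. destruct (dec _) as [H|H]; [|exfalso; eauto].
      destruct (constructive_indefinite_description _ H) as [p' [Hp' Hz']]. simpl.
      destruct (list_eq_dec Nat.eq_dec p' p) as [->|Hne]; auto. exfalso. eapply (F4 p' p z); eauto. }
    clearbody th.
    assert (Hsl : s = app_subst th l).
    { rewrite Hs. apply app_subst_ext. intros z Hz. symmetry. auto. }
    assert (Hlp : forall p, P0 p -> app_subst th (lhs (rho0 p)) = app_subst (MU p) (lhs (rho p))).
    { intros p Hp. simpl. rewrite app_subst_comp. apply app_subst_ext. intros x Hx. simpl.
      rewrite (Th2 p); [rewrite Hinv; auto|auto|]. left. simpl. apply vars_subst. exists x. simpl; auto. }
    assert (Hrp : forall p, P0 p -> app_subst th (rhs (rho0 p)) = app_subst (MU p) (rhs (rho p))).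
    { intros p Hp. simpl. rewrite app_subst_comp. apply app_subst_ext. intros x Hx. simpl.
      rewrite (Th2 p); [rewrite Hinv; auto|auto|]. right. simpl. apply vars_subst. exists x. simpl; auto. }
    set (lpart := fun p => match subterm l p with Some a => a | None => l end).
    set (E := map (fun p => (lhs (rho0 p), lpart p))
                  (filter (fun p => if dec (P0 p) then true else false) (allpos l))).
    assert (HinE : forall e, In e E <-> exists p, P0 p /\ e = (lhs (rho0 p), lpart p)).
    { intros e. unfold E. rewrite in_map_iff. split.
      - intros [p [<- Hp]]. apply filter_In in Hp as [_ Hp]. destruct (dec (P0 p)); [|discriminate]. eauto.
      - intros [p [Hp ->]]. exists p. split; auto. apply filter_In. split; auto. destruct (dec (P0 p)); tauto. }
    assert (Hlpart : forall p, P0 p -> subterm l p = Some (lpart p)).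
    { intros p [_ [f [ts Hf]]]. unfold lpart. rewrite Hf. auto. }
    assert (HunifE : forall sg, unif E sg <-> unifies P0 rho0 l sg).
    { intros sg. split.
      - intros H p Hp. exists (lpart p). split; auto. apply (H (lhs (rho0 p), lpart p)). apply HinE. eauto.
      - intros H e He. apply HinE in He as [p [Hp ->]]. destruct (H p Hp) as [lp [Hlp' Heq]].
        rewrite Hlpart in Hlp' by auto. injection Hlp' as <-. auto. }
    assert (Hth_unif : unif E th).
    { apply HunifE. intros p Hp. exists (lpart p). split; auto.
      rewrite Hlp by auto. destruct Hp as [Hp HF].
      pose proof (subterm_subst th l p (lpart p) (Hlpart p (conj Hp HF))) as Hx.
      rewrite <- Hsl, (proj1 (HMU p Hp)) in Hx. congruence. }
    destruct (robinson E (ex_intro _ th Hth_unif)) as [s0 [U1 [U2 [U3 U4]]]].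
    destruct (U2 th Hth_unif) as [de Hde].
    destruct (split_lemma l P (Qrho R rho) th t (fun p => rhs (rho0 p))) as [th' [S1 [S2 [S3 S4]]]].
    { exact Hll. }
    { rewrite <- Hsl. exact Hpar. }
    { intros p lp b Hp Hsub Hf [_ [m [Hm ->]]].
      assert (HP0 : P0 p) by (destruct Hf as [f [ts ->]]; split; auto; exists f, ts; auto).
      rewrite Hrp by auto.
      pose proof (subterm_subst th l p lp Hsub) as Hx. rewrite <- Hsl, (proj1 (HMU p Hp)) in Hx.
      injection Hx as Hx. rewrite Hm in Hx.
      apply app_subst_ext. intros x Hx'. apply (subst_agree_lhs (lhs (rho p))); auto.
      apply (proj2 (HR _ (HRp p Hp))). auto. }
    { intros p x Hp HF Hx Hxl. apply (F3 p x (conj Hp HF)). right. auto. left. auto. }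
    assert (Hfree_np : forall z, free l P z -> ~ In z (pvars E)).
    { intros z [Hzl Hfr] Hz. unfold pvars in Hz. apply in_flat_map in Hz as [e [He Hz]].
      apply HinE in He as [p [Hp ->]]. simpl in Hz. apply in_app_or in Hz as [Hz|Hz].
      - apply (F3 p z Hp). left. auto. left. auto.
      - destruct Hp as [Hp [f [ts Hf]]]. apply (Hfr p (Fun f ts) Hp Hf); [exists f, ts; auto|].
        unfold lpart in Hz. rewrite Hf in Hz. auto. }
    set (T := repl (fun p => P p /\ posF l p) (fun p => rhs (rho0 p)) l) in *.
    set (tau := fun z => if dec (free l P z) then th' z else de z).
    assert (Hst : forall z, app_subst tau (s0 z) = th' z).
    { intros z. destruct (dec (free l P z)) as [Hf|Hf].
      - rewrite U3 by (apply Hfree_np; auto). simpl. unfold tau. destruct (dec _); tauto.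
      - rewrite S1 by auto. rewrite Hde. apply app_subst_ext. intros w Hw. unfold tau.
        destruct (dec (free l P w)) as [Hfw|]; auto. exfalso.
        destruct (in_dec eqv z (pvars E)) as [Hz|Hz].
        + apply (Hfree_np w Hfw). eapply U4; eauto.
        + rewrite U3 in Hw by auto. destruct Hw as [<-|[]]. auto. }
    assert (Hsd : forall z, app_subst de (s0 z) = th z) by (intros; symmetry; auto).
    exists (app_subst s0 l), (app_subst s0 T), (app_subst s0 r), P0, de, tau.
    split; [|split; [|split; [|split; [|split; [|split]]]]].
    + exists lr, rho0, s0. split; [|split; [|split; [|split; [|split; [|split; [|split; [|split; [|split; [|split; [|split]]]]]]]]]].
      * exists lr. split; auto. exists (fun x => x), (fun x => x). split; auto. split; auto.
        split; symmetry; apply app_subst_id.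
      * exact HnA1.
      * intros p [_ HF]. exact HF.
      * intros p q [Hp _] [Hq _] Hne. apply Hpp; auto.
      * intros p [Hp _]. exists (rho p). split; auto. apply variant_ren. auto.
      * exact F3.
      * exact F4.
      * split. apply HunifE. auto. intros th2 Hth2. apply U2. apply HunifE. auto.
      * intros Hall Hv. apply HnA2. split.
        -- assert (H0 : P []) by (apply Hall; auto). intros p. split.
           ++ apply pp_root; auto.
           ++ intros ->. auto.
        -- apply (variant_ren_back (pi [])); auto.
      * reflexivity.
      * pose proof (pr_repl P0 (fun p => rhs (rho0 p)) s0 l (fun p H => proj2 H) ltac:(intros p q Hp Hq; apply Hpp; apply Hp || apply Hq))
          as [H1 [H2 H3]].
        split; [|split; [|split]]; auto.
        -- intros p Hp. destruct (H2 p Hp) as [a [b [Ha _]]]. congruence.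
        -- intros p Hp. destruct (H2 p Hp) as [a [b [_ [Hb ->]]]]. auto.
      * reflexivity.
    + rewrite app_subst_comp. rewrite Hsl. apply app_subst_ext. intros z _. auto.
    + rewrite app_subst_comp. rewrite S2. apply app_subst_ext. intros z _. symmetry. auto.
    + rewrite app_subst_comp. rewrite Hu. apply app_subst_ext. intros z Hz. rewrite Hsd. symmetry. apply Th1. apply Hrl. auto.
    + intros z. destruct (dec (free l P z)) as [Hf|Hf].
      * destruct Hf as [Hzl Hfr0] eqn:Hfeq. destruct (var_pos l z Hzl) as [q Hq].
        exists (fun r' => P (q ++ r')). exists (fun r' => rho (q ++ r')). apply psw_pr.
        assert (Hdz : de z = th z).
        { rewrite <- Hsd. rewrite U3 by (apply Hfree_np; auto). auto. }
        assert (Htz : tau z = th' z) by (unfold tau; destruct (dec _); tauto).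
        rewrite Hdz, Htz. exact (S4 z q Hq Hf).
      * assert (Htz : tau z = de z) by (unfold tau; destruct (dec _); tauto).
        rewrite Htz. exists (fun _ => False). apply par_step_empty.
    + exists rho. apply psw_pr.
      rewrite !app_subst_comp.
      rewrite (app_subst_ext (fun x => app_subst de (s0 x)) th) by auto.
      rewrite (app_subst_ext (fun x => app_subst tau (s0 x)) th') by auto.
      eapply pr_ext; [|exact S3]. intros p. unfold P0. tauto.
    + intros p [Hp _]. auto.
Qed.
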